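(* Let $n\ge2$ and let $\mathfrak G_n$, $\mathcal G_n$, $\iota_n$, $\mathcal N_{0,n}$, $z_g$, $U_m(z_g)$ and $\mathfrak H_{j,n}$ be as in the context. Let $m\ge1$ and let $K\in\{\mathfrak H_{j,n},\ \mathcal N_{0,n}\setminus\mathfrak H_{j,n}: j=0,\dots,2^n-2\}$. Set $$M_K=\Bigl(\bigcap_{g\in K}U_m(z_g)\Bigr)\setminus\bigcup_{h\in\mathcal N_{0,n}\setminus K}U_m(z_h).$$ Then $M_K=\bigcap_{g\in K}U_m(z_g)$.
   Context: Let $X=\{\mathbf 0,\mathbf 1\}$, $X^*$ the finite words (with empty word $\varnothing$), $X^\omega$ the infinite words with the product topology, $C(\eta)=\{\eta w:w\in X^\omega\}$, $\mathbf 1^m$ the word of $m$ ones and $\mathbf 1^\infty$ the infinite word of ones. Fix $n\ge2$, a primitive polynomial $f_n$ of degree $n$ over $\mathbb F_2$ with root $\alpha$ (so $\mathbb F_{2^n}=\mathbb F_2(\alpha)$, $\alpha$ generates $\mathbb F_{2^n}^*$), and $\operatorname{Tr}(\beta)=\beta+\beta^2+\dots+\beta^{2^{n-1}}\in\mathbb F_2$. $\mathfrak G_n$ is the group of automorphisms of the binary rooted tree $X^*$ generated by $a$ ($a\cdot(\mathbf 0w)=\mathbf 1w$, $a\cdot(\mathbf 1w)=\mathbf 0w$) and $\iota_n(\beta)$, $\beta\in\mathbb F_{2^n}$, where $\iota_n(\beta)\cdot(\mathbf 0w)=\mathbf 0(a^{\operatorname{Tr}(\beta)}\cdot w)$ and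 $\iota_n(\beta)\cdot(\mathbf 1w)=\mathbf 1(\iota_n(\alpha\beta)\cdot w)$; $\iota_n$ is an injective homomorphism of $(\mathbb F_{2^n},+)$ into $\mathfrak G_n$ and $e=\iota_n(0)$. Restrictions $g|_x$ are defined by $g\cdot(xw)=(g\cdot x)(g|_x\cdot w)$ and extended to words. Let $\mathcal N_{0,n}=\iota_n(\mathbb F_{2^n})$. For $j=0,\dots,2^n-2$ let $\mathfrak H_{j,n}=\iota_n(\{\beta:\operatorname{Tr}(\alpha^j\beta)=0\})$, a subgroup of order $2^{n-1}$. $\mathcal G_n$ is the groupoid of germs of the action of the inverse semigroup $\{(\eta,g,\mu):\eta,\mu\in X^*,g\in\mathfrak G_n\}\cup\{0\}$ on $X^\omega$, where $(\eta,g,\mu)$ maps $C(\mu)\to C(\eta)$ by $\mu w\mapsto\eta(g\cdot w)$: elements are germs $[(\eta,g,\mu),w]$ with $w\in C(\mu)$, and $[(\eta,g,\mu),w]=[(\eta',g',\mu'),w']$ iff $w=w'$ and there is a finite prefix $\nu$ of $w$ with $\nu=\mu\epsilon=\mu'\epsilon'$, $\eta(g\cdot\epsilon)=\eta'(g'\cdot\epsilon')$ and $g|_\epsilon=g'|_{\epsilon'}$. For $s=(\eta,g,\mu)$ and open $U\subseteq C(\mu)$ let $\Theta(s,U)=\{[s,w]:w\in U\}$; these are open bisections forming a basis of the topology. For $g\in\mathfrak G_n$ let $z_g=[(\varnothing,g,\varnothing),\mathbf 1^\infty]$ and $U_m(z_g)=\Theta((\varnothing,g,\varnothing),C(\mathbf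 1^m))$, a compact open bisection containing $z_g$. *)

(* Defs.v *)
From HB Require Import structures.
From mathcomp Require Import all_boot all_algebra.
Set Implicit Arguments. Unset Strict Implicit. Unset Printing Implicit Defensive.
Import GRing.Theory.
Local Open Scope ring_scope.

(* Letters: 0 = false, 1 = true.  Finite words X^* = seq bool,
   infinite words X^omega = nat -> bool. *)
Definition infword := nat -> bool.

Definition inC (eta : seq bool) (w : infword) : Prop :=
  forall i, (i < size eta)%N -> w i = nth false eta i.

Definition pref (w : infword) (k : nat) : seq bool := mkseq w k.

Definition aact (w : seq bool) : seq bool :=
  match w with [::] => [::] | x :: w' => ~~ x :: w' end.

Section Field.
Variables (F : finFieldType) (n : nat) (alpha : F).

Definition tr (b : F) : F := \sum_(i < n) b ^+ (2 ^ i).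

Fixpoint iotan (b : F) (w : seq bool) : seq bool :=
  match w with
  | [::] => [::]
  | false :: w' => false :: (if tr b == 1 then aact w' else w')
  | true :: w' => true :: iotan (alpha * b) w'
  end.

Inductive inG : (seq bool -> seq bool) -> Prop :=
| G_a : inG aact
| G_iota b : inG (iotan b)
| G_comp g h : inG g -> inG h -> inG (g \o h)
| G_inv g h : inG g -> cancel g h -> cancel h g -> inG h
| G_ext g h : inG g -> g =1 h -> inG h.

Definition inN0 (g : seq bool -> seq bool) : Prop := exists b, g =1 iotan b.

(* H_{j,n} as a set of field elements: {beta | Tr(alpha^j beta) = 0} *)
Definition Hset (j : nat) (b : F) : bool := tr (alpha ^+ j * b) == 0.
End Field.

Definition restr (g : seq bool -> seq bool) (x u : seq bool) : seq bool :=
  drop (size x) (g (x ++ u)).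

Record triple := Triple { t_eta : seq bool; t_g : seq bool -> seq bool; t_mu : seq bool }.

Definition germrep := (triple * infword)%type.

Definition valid_germ (G : (seq bool -> seq bool) -> Prop) (r : germrep) : Prop :=
  G (t_g r.1) /\ inC (t_mu r.1) r.2.

Definition germ_eq (r r' : germrep) : Prop :=
  (forall i, r.2 i = r'.2 i) /\
  exists (k : nat) (e e' : seq bool),
    pref r.2 k = t_mu r.1 ++ e /\ pref r.2 k = t_mu r'.1 ++ e' /\
    t_eta r.1 ++ t_g r.1 e = t_eta r'.1 ++ t_g r'.1 e' /\
    (forall u, restr (t_g r.1) e u = restr (t_g r'.1) e' u).

(* z_g = [(empty,g,empty), 1^infty];
   membership of the germ represented by r in U_m(z_g) = Theta((empty,g,empty), C(1^m)) *)
Definition inU (m : nat) (g : seq bool -> seq bool) (r : germrep) : Prop :=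
  exists w : infword, inC (nseq m true) w /\ germ_eq r (Triple [::] g [::], w).

(* Main.v *)
Require Import Defs.
From mathcomp Require Import all_boot all_algebra all_field.
From Stdlib Require Import Classical.
Import GRing.Theory.
Local Open Scope ring_scope.


Section Alg.
Variables (F : finFieldType) (n : nat).
Hypothesis hn : (2 <= n)%N.
Hypothesis hF : #|F| = (2 ^ n)%N.

Lemma char2F : (2 \in [pchar F])%N.
Proof. by apply: (card_finPcharP hF). Qed.

Lemma sqD (x y : F) : (x + y) ^+ 2 = x ^+ 2 + y ^+ 2.
Proof. by rewrite sqrrD mulr2n addrr_pchar2 ?char2F // addr0. Qed.

Lemma powD (i : nat) (x y : F) : (x + y) ^+ (2 ^ i) = x ^+ (2 ^ i) + y ^+ (2 ^ i).
Proof.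
elim: i => [|i IH]; first by rewrite !expr1.
by rewrite expnSr !exprM IH sqD.
Qed.

Lemma trD (x y : F) : tr n (x + y) = tr n x + tr n y.
Proof. by rewrite /tr -big_split /=; apply: eq_bigr => i _; rewrite powD. Qed.

Lemma tr0 : tr n (0 : F) = 0.
Proof. by rewrite /tr big1 // => i _; rewrite expr0n expn_eq0. Qed.

Lemma tr01 (x : F) : tr n x = 0 \/ tr n x = 1.
Proof.
have e : tr n x ^+ 2 = tr n x.
  have -> : forall k, (\sum_(i < k) x ^+ (2 ^ i)) ^+ 2 = \sum_(i < k) x ^+ (2 ^ i.+1).
    elim=> [|k IH]; first by rewrite !big_ord0 expr0n.
    by rewrite !big_ord_recr /= sqD IH -exprM expnSr.
  rewrite /tr.
  move: hF; case: n hn => [//|n'] _ hF'.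
  rewrite big_ord_recr /= big_ord_recl /= expn0 expr1 -hF' expf_card.
  by rewrite addrC; congr (_ + _); apply: eq_bigr => i _.
have : tr n x * (tr n x - 1) = 0 by rewrite mulrBr mulr1 -expr2 e subrr.
move/eqP; rewrite mulf_eq0 subr_eq0 => /orP[/eqP|/eqP]; tauto.
Qed.

Lemma tr_ne0 : exists y : F, tr n y = 1.
Proof.
pose P : {poly F} := \sum_(i < n) 'X^(2 ^ i).
have hP : forall y, P.[y] = tr n y.
  by move=> y; rewrite /P horner_sum; apply: eq_bigr => i _; rewrite hornerXn.
have sP : (size P <= (2 ^ n.-1).+1)%N.
  rewrite /P; apply: (big_ind (fun p : {poly F} => size p <= (2 ^ n.-1).+1)%N).
  - by rewrite size_poly0.
  - by move=> p q hp hq; apply: leq_trans (size_polyD _ _) _; rewrite geq_max hp hq.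
  - move=> i _; rewrite size_polyXn ltnS leq_exp2l //; rewrite -ltnS prednK //.
    by apply: leq_trans hn.
have P0 : P != 0.
  apply/eqP => /(congr1 (fun p : {poly F} => p`_(2 ^ n.-1))).
  rewrite coef0 /P coef_sum.
  have hi : (n.-1 < n)%N by rewrite prednK // (leq_trans _ hn).
  rewrite (bigD1 (Ordinal hi)) //= coefXn eqxx big1 ?addr0; first by move/eqP; rewrite oner_eq0.
  move=> i /eqP hne; rewrite coefXn.
  case: eqP => // /eqP; rewrite eqn_exp2l // => /eqP h.
  by exfalso; apply: hne; apply: val_inj.
have [y hy | none] := pickP (fun y : F => tr n y != 0).
  by exists y; case: (tr01 y) hy => ->; rewrite ?eqxx.
exfalso.
have := max_poly_roots P0 (rs := enum F).
rewrite enum_uniq.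
have -> : all (root P) (enum F).
  by apply/allP => y _; rewrite /root hP; move: (none y) => /= /negbFE.
move=> /(_ isT isT); rewrite -cardE hF => h.
have := leq_trans h sP; rewrite ltnS leqNgt ltn_exp2l // prednK //.
  by rewrite leqnn.
by apply: leq_trans hn.
Qed.

Lemma div_alpha (alpha : F) (halpha : (2 ^ n).-1.-primitive_root alpha) (i : nat) (z : F) :
  exists x, alpha ^+ i * x = z.
Proof.
have N0 : (0 < (2 ^ n).-1)%N.
  by rewrite -ltnS prednK ?expn_gt0 // (@leq_exp2l 2 1 n) // (leq_trans _ hn).
exists ((alpha ^+ ((2 ^ n).-1).-1) ^+ i * z).
rewrite mulrA -exprMn -exprS prednK //.
by rewrite (prim_expr_order halpha) expr1n mul1r.
Qed.

Lemma alg_contra (alpha : F) (halpha : (2 ^ n).-1.-primitive_root alpha) (j q : nat)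
  (Kb : pred F) (hK : Kb =1 Hset n alpha j \/ Kb =1 predC (Hset n alpha j))
  (g : F) (nK : ~ Kb g)
  (H : forall b, Kb b -> (tr n (alpha ^+ q * b) == 1) = (tr n (alpha ^+ q * g) == 1)) : False.
Proof.
have t01 := tr01.
have o1 : (1 : F) != 0 := oner_neq0 _.
have e11 : (1 : F) + 1 = 0 by rewrite addrr_pchar2 // char2F.
have [y hy] := tr_ne0.
have [xq hxq] := div_alpha alpha halpha q y.
have [xj hxj] := div_alpha alpha halpha j y.
have hyq : tr n (alpha ^+ q * xq) = 1 by rewrite hxq.
have hyj : tr n (alpha ^+ j * xj) = 1 by rewrite hxj.
case: hK => hK.
- have K0 : Kb 0 by rewrite hK /Hset mulr0 tr0.
  have := H _ K0; rewrite mulr0 tr0 eq_sym (negbTE o1) => hg.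
  have tg : tr n (alpha ^+ j * g) = 1.
    case: (t01 (alpha ^+ j * g)) => // h; exfalso; apply: nK; by rewrite hK /Hset h.
  have tgq : tr n (alpha ^+ q * g) = 0.
    by case: (t01 (alpha ^+ q * g)) => // h; move: hg; rewrite h eqxx.
  case: (t01 (alpha ^+ j * xq)) => h.
  + have := H xq; rewrite hK /Hset h eqxx hyq tgq eqxx eq_sym (negbTE o1) => /(_ isT) //.
  + have := H (xq + g); rewrite hK /Hset !mulrDr !trD h tg e11 eqxx hyq tgq addr0 eqxx.
    by rewrite eq_sym (negbTE o1) => /(_ isT).
- have tg : tr n (alpha ^+ j * g) = 0.
    case: (t01 (alpha ^+ j * g)) => // h; exfalso; apply: nK; by rewrite hK /= /Hset h o1.
  have Kxj : Kb xj by rewrite hK /= /Hset hyj o1.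
  case: (t01 (alpha ^+ j * xq)) => h.
  + have Kx : Kb (xj + xq) by rewrite hK /= /Hset mulrDr trD h hyj addr0 o1.
    have := H _ Kx; have := H _ Kxj; rewrite mulrDr trD hyq.
    by case: (t01 (alpha ^+ q * xj)) => ->; case: (t01 (alpha ^+ q * g)) => ->;
      rewrite ?e11 ?add0r ?addr0 ?eqxx ?(eq_sym 0 1) ?(negbTE o1).
  + have Kx : Kb xq by rewrite hK /= /Hset h o1.
    have Kx2 : Kb (xj + g) by rewrite hK /= /Hset mulrDr trD tg hyj addr0 o1.
    have := H _ Kx; have := H _ Kx2; have := H _ Kxj; rewrite mulrDr trD hyq.
    by case: (t01 (alpha ^+ q * xj)) => ->; case: (t01 (alpha ^+ q * g)) => ->;
      rewrite ?e11 ?add0r ?addr0 ?eqxx ?(eq_sym 0 1) ?(negbTE o1).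
Qed.
End Alg.

Definition Pg (g : seq bool -> seq bool) :=
  (forall x, size (g x) = size x) /\ (forall x u, take (size x) (g (x ++ u)) = g x).

Lemma Pg_split g x u : Pg g -> g (x ++ u) = g x ++ restr g x u.
Proof. by case=> _ h; rewrite /restr -{1}(cat_take_drop (size x) (g (x ++ u))) h. Qed.

Lemma Pg_aact : Pg aact.
Proof.
split; first by case.
by case=> [|c x] u /=; [case: u | rewrite take_size_cat].
Qed.

Lemma Pg_iotan (F : finFieldType) n (alpha : F) b : Pg (iotan n alpha b).
Proof.
split.
  move=> x; elim: x b => [|c x IH] b //=; case: c => /=; first by rewrite IH.
  by case: ifP => _ //; case: x {IH}.
move=> x u; elim: x b => [|c x IH] b /=; first by case: (iotan n alpha b u).
case: c => /=; first by rewrite IH.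
by case: ifP => _ //; case: x {IH} => [|c x] /=; rewrite ?take0 ?take_size_cat.
Qed.

Lemma Pg_inG (F : finFieldType) n (alpha : F) g : inG n alpha g -> Pg g.
Proof.
elim=> {g}.
- exact: Pg_aact.
- move=> b; exact: Pg_iotan.
- move=> g h _ [sg tg] _ Ph; have [sh th] := Ph.
  split=> [x|x u] /=; first by rewrite sg sh.
  by rewrite (Pg_split _ _ _ Ph) -{1}(sh x) tg.
- move=> g h _ [sg tg] gh hg; split=> [y|y v].
    by rewrite -(sg (h y)) hg.
  set z := h (y ++ v).
  have sz : size z = (size y + size v)%N by rewrite /z -size_cat -(sg (h _)) hg.
  have e1 : g (take (size y) z) = y.
    have := tg (take (size y) z) (drop (size y) z).
    rewrite cat_take_drop size_take sz.
    case: ltnP => [_ <-|]; first by rewrite /z hg take_size_cat.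
    rewrite -{2}(addn0 (size y)) leq_add2l leqn0 => /eqP /size0nil v0.
    by move=> <-; rewrite /z hg v0 cats0 addn0 take_size.
  by have := congr1 h e1; rewrite gh.
- move=> g h _ [sg tg] e; split=> [x|x u]; first by rewrite -e.
  by rewrite -!e.
Qed.

Lemma germ_ext (t g : seq bool -> seq bool) eta e e' d :
  Pg t -> Pg g -> eta ++ t e = g e' -> (forall u, restr t e u = restr g e' u) ->
  eta ++ t (e ++ d) = g (e' ++ d) /\ forall u, restr t (e ++ d) u = restr g (e' ++ d) u.
Proof.
move=> Pt Pg' h1 h2; split.
  by rewrite (Pg_split _ _ _ Pt) (Pg_split _ _ _ Pg') catA h1 h2.
move=> u; rewrite /restr !size_cat (addnC (size e)) (addnC (size e')) -!drop_drop -!catA.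
by have := h2 (d ++ u); rewrite /restr => ->.
Qed.

Lemma pref_cat w a b : pref w (a + b) = pref w a ++ [seq w i | i <- iota a b].
Proof. by rewrite /pref /mkseq iotaD map_cat. Qed.

Lemma pref_ext w k k' : (k <= k')%N -> exists d, pref w k' = pref w k ++ d.
Proof. by move=> /subnKC <-; rewrite pref_cat; eexists. Qed.

Lemma germ_single (t g : seq bool -> seq bool) eta mu w k e e' :
  Pg t -> Pg g -> pref w k = mu ++ e -> pref w k = e' -> eta ++ t e = g e' ->
  (forall u, restr t e u = restr g e' u) ->
  forall k', (k <= k')%N -> exists e2, pref w k' = mu ++ e2 /\ eta ++ t e2 = g (pref w k') /\
     forall u, restr t e2 u = restr g (pref w k') u.
Proof.
move=> Pt Pg' h1 h2 h3 h4 k' hk; have [d hd] := @pref_ext w _ _ hk.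
have [h5 h6] := @germ_ext _ _ _ _ _ d Pt Pg' h3 h4.
subst e'; exists (e ++ d); rewrite hd; split; first by rewrite h1 catA.
by split.
Qed.

Lemma germ_pair (r : germrep) g h w1 w2 :
  Pg (t_g r.1) -> Pg g -> Pg h ->
  germ_eq r (Triple [::] g [::], w1) -> germ_eq r (Triple [::] h [::], w2) ->
  exists K, forall k, (K <= k)%N -> g (pref r.2 k) = h (pref r.2 k) /\
     forall u, restr g (pref r.2 k) u = restr h (pref r.2 k) u.
Proof.
move=> Pt Pg' Ph [_ [k1 [e1 [e1' [p1 [p1' [q1 r1]]]]]]] [_ [k2 [e2 [e2' [p2 [p2' [q2 r2]]]]]]].
simpl in *.
exists (maxn k1 k2) => k hk.
have [f1 [a1 [b1 c1]]] := @germ_single _ _ _ _ _ _ _ _ Pt Pg' p1 p1' q1 r1 k (leq_trans (leq_maxl _ _) hk).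
have [f2 [a2 [b2 c2]]] := @germ_single _ _ _ _ _ _ _ _ Pt Ph p2 p2' q2 r2 k (leq_trans (leq_maxr _ _) hk).
have ef : f1 = f2.
  by have := congr1 (drop (size (t_mu r.1))) a1; rewrite a2 !drop_size_cat.
subst f2; split; first by rewrite -b1 -b2.
by move=> u; rewrite -c1 -c2.
Qed.

Lemma map_iota_true (w : infword) p m :
  (forall i, (m <= i)%N -> (i < m + p)%N -> w i = true) -> [seq w i | i <- iota m p] = nseq p true.
Proof.
elim: p m => [|p IH] m h //=.
rewrite h ?leqnn ?addnS ?ltnS ?leq_addr // IH // => i hi1 hi2.
by apply: h; [apply: ltnW | rewrite addnS -addSn].
Qed.

Lemma pref_zero w p k : (forall i, (i < p)%N -> w i = true) -> w p = false -> (p.+2 <= k)%N ->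
  exists v, pref w k = nseq p true ++ false :: w p.+1 :: v.
Proof.
move=> h1 h2 /subnKC <-; rewrite pref_cat -(addn2 p) pref_cat.
rewrite {1}/pref /mkseq map_iota_true //= ?h2.
  by rewrite -catA /=; eexists.
by move=> i _; apply: h1.
Qed.

Lemma pref_ones w k : (forall i, w i = true) -> pref w k = nseq k true.
Proof. by move=> h; rewrite /pref /mkseq map_iota_true. Qed.

Section Conc.
Variables (F : finFieldType) (n : nat) (alpha : F).

Lemma iotan_ones b p x :
  iotan n alpha b (nseq p true ++ x) = nseq p true ++ iotan n alpha (alpha ^+ p * b) x.
Proof.
elim: p b => [|p IH] b /=; first by rewrite expr0 mul1r.
by rewrite IH mulrA -exprSr.
Qed.

Lemma iotan_zero b c v :
  iotan n alpha b (false :: c :: v) = false :: (if tr n b == 1 then ~~ c else c) :: v.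
Proof. by rewrite /=; case: ifP. Qed.

Definition germP (w : infword) b g :=
  exists K, forall k, (K <= k)%N ->
    iotan n alpha b (pref w k) = iotan n alpha g (pref w k) /\
    forall u, restr (iotan n alpha b) (pref w k) u = restr (iotan n alpha g) (pref w k) u.

Lemma statusA w p b g : (forall i, (i < p)%N -> w i = true) -> w p = false ->
  germP w b g -> (tr n (alpha ^+ p * b) == 1) = (tr n (alpha ^+ p * g) == 1).
Proof.
move=> h1 h2 [K hK].
have [v hv] := pref_zero w p (maxn K p.+2) h1 h2 (leq_maxr K p.+2).
have [e _] := hK _ (leq_maxl K p.+2).
move: e; rewrite hv !iotan_ones !iotan_zero => /eqP; rewrite eqseq_cat // => /andP[_ /eqP [] ].
by case: (_ == 1); case: (_ == 1); case: (w p.+1).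
Qed.

Lemma statusB w b g : (0 < (2 ^ n).-1)%N -> (2 ^ n).-1.-primitive_root alpha ->
  (forall i, w i = true) ->
  germP w b g -> (tr n b == 1) = (tr n g == 1).
Proof.
move=> N0 ha h1 [K hK].
have [_ e] := hK _ (leqnn K).
pose i := (K * ((2 ^ n).-1).-1)%N.
have := e (nseq i true ++ [:: false; false]).
rewrite /restr pref_ones // !iotan_ones !drop_size_cat ?size_nseq //.
rewrite !iotan_zero !mulrA -!exprD.
have -> : (i + K = (2 ^ n).-1 * K)%N by rewrite /i -mulnSr prednK // mulnC.
rewrite exprM.
rewrite (prim_expr_order ha) expr1n !mul1r.
move=> /eqP; rewrite eqseq_cat // => /andP[_ /eqP [] ].
by case: (_ == 1); case: (_ == 1).
Qed.
End Conc.

Theorem mainTheorem5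
  (n : nat) (hn : (2 <= n)%N)
  (F : finFieldType) (hF : #|F| = (2 ^ n)%N)
  (alpha : F) (halpha : (2 ^ n).-1.-primitive_root alpha)
  (m : nat) (hm : (1 <= m)%N)
  (j : nat) (hj : (j <= 2 ^ n - 2)%N)
  (Kb : pred F)
  (hK : Kb =1 Hset n alpha j \/ Kb =1 predC (Hset n alpha j)) :
  let inK := fun g : seq bool -> seq bool =>
               exists b, Kb b /\ g =1 iotan n alpha b in
  let inInter := fun r : germrep =>
               forall g, inK g -> inU m g r in
  let inM := fun r : germrep =>
               inInter r /\
               ~ (exists h, inN0 n alpha h /\ ~ inK h /\ inU m h r) in
  forall r : germrep, valid_germ (inG n alpha) r -> (inM r <-> inInter r).
Proof.
move=> inK inInter inM r [Gt _]; split; first by case.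
move=> hI; split=> //; move=> [h [[g hg] [nK hU]]].
have nKg : ~ Kb g by move=> kb; apply: nK; exists g.
have Pt := @Pg_inG F n alpha _ Gt.
have Ph : Pg h.
  apply: (@Pg_inG F n alpha); apply: (G_ext (@G_iota F n alpha g)) => x; by rewrite hg.
have GP : forall b, Kb b -> germP F n alpha r.2 b g.
  move=> b kb.
  have [w1 [_ e1]] := hI (iotan n alpha b) (ex_intro _ b (conj kb (frefl _))).
  have [w2 [_ e2]] := hU.
  have [K hK'] := germ_pair _ _ _ _ _ Pt (Pg_iotan F n alpha b) Ph e1 e2.
  exists K => k hk; have [a c] := hK' k hk; split; first by rewrite a hg.
  by move=> u; rewrite c /restr hg.
have N0 : (0 < (2 ^ n).-1)%N.
  by rewrite -ltnS prednK ?expn_gt0 // (@leq_exp2l 2 1 n) // (leq_trans _ hn).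
case: (classic (exists p, r.2 p = false)) => [ex | nex].
- have ex' : exists p, ~~ r.2 p by case: ex => p hp; exists p; rewrite hp.
  case: (ex_minnP ex') => p hp hmin.
  have h1 : forall i, (i < p)%N -> r.2 i = true.
    move=> i hi; apply/negPn/negP => hi'.
    by have := hmin i hi'; rewrite leqNgt hi.
  apply: (@alg_contra F n hn hF alpha halpha j p Kb hK g nKg) => b kb.
  by apply: (statusA F n alpha r.2 p b g h1 _ (GP b kb)); apply/negbTE.
- have h1 : forall i, r.2 i = true.
    by move=> i; apply/negPn/negP => /negbTE hi; apply: nex; exists i.
  apply: (@alg_contra F n hn hF alpha halpha j 0 Kb hK g nKg) => b kb.
  rewrite !expr0 !mul1r.
  exact: (statusB F n alpha r.2 b g N0 halpha h1 (GP b kb)).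
Qed.
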